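(* Let $n,k$ be positive integers with $n\ge 2(k+1)$, let $G=W_n^k$ be the web graph, and let $C\subseteq V(G)$ (possibly empty). Let $m_1=n-\delta_1+1$ where $\delta_1=\min_{v\in V}|N\langle v\rangle|$ (so $m_1=n-2k$ if $C=V$ and $m_1=n-2k+1$ if $C\ne V$). Then $\gamma_{\rm gr}(G;C)=m_1$ if (i) $C=V$, or (ii) there is $i\in V\setminus C$ such that $V\setminus N[i]$ induces a path $P_t$ with $t=n-2k-1$ and $C$ is a good configuration for this path. Otherwise $\gamma_{\rm gr}(G;C)=m_1-1$.
   Context: The web $W_n^k$ has vertex set $V=\{0,\dots,n-1\}$ and edge set $\{\{i,j\}: 0<|i-j|\le k \text{ or } |i-j|\ge n-k\}$. $N\langle v\rangle = N[v]$ (closed neighborhood) if $v\in C$ and $N\langle v\rangle=N(v)$ (open neighborhood) if $v\notin C$. A sequence $(v_1,\dots,v_s)$ of distinct vertices is legal if $N\langle v_i\rangle\setminus\bigcup_{j<i}N\langle v_j\rangle\neq\emptyset$ for all $i\ge 2$, and dominating if $\bigcup_j N\langle v_j\rangle=V$; $\gamma_{\rm gr}(G;C)$ is the maximum length of a legal dominating sequence. Good configuration (defined for a path with vertices $a_1,\dots,a_s$ in order, applied to $C\cap\{a_1,\dots,a_s\}$; isolated vertices outside $C$ are allowed): $C$ is a good configuration for the path if (i) $s=1$ and $a_1\in C$; or (ii) $s=2$ and $\{a_1,a_2\}\not\subseteq C$; or (iii) $s\ge 3$ and either $a_1\notin C$ and $C$ is a good configuration for $(a_3,\dots,a_s)$,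 or $a_s\notin C$ and $C$ is a good configuration for $(a_1,\dots,a_{s-2})$. *)

(* Defs.v *)
From mathcomp Require Import all_boot all_order.
Set Implicit Arguments. Unset Strict Implicit. Unset Printing Implicit Defensive.

Section Web.
Variables n k : nat.
Notation V := 'I_n.

Definition vdist (i j : V) : nat := maxn i j - minn i j.

Definition web_adj (i j : V) : bool :=
  (i != j) && ((vdist i j <= k) || (n - k <= vdist i j)).

Definition Nopen (v : V) : {set V} := [set u | web_adj v u].
Definition Nclosed (v : V) : {set V} := v |: Nopen v.

Definition Nangle (C : {set V}) (v : V) : {set V} :=
  if v \in C then Nclosed v else Nopen v.

Fixpoint legal_from (C : {set V}) (U : {set V}) (s : seq V) : bool :=
  match s with
  | [::] => true
  | x :: s' => (~~ (Nangle C x \subset U)) && legal_from C (U :|: Nangle C x) s'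
  end.

Definition legal (C : {set V}) (s : seq V) : bool :=
  uniq s &&
  match s with
  | [::] => true
  | x :: s' => legal_from C (Nangle C x) s'
  end.

Definition dominating (C : {set V}) (s : seq V) : bool :=
  \bigcup_(x <- s) Nangle C x == [set: V].

(* gamma_gr(W_n^k; C): maximum length of a legal dominating sequence
   (legal sequences have distinct entries, hence length <= n) *)
Definition gamma_gr (C : {set V}) : nat :=
  \max_(m < n.+1 | [exists t : m.-tuple V, legal C t && dominating C t]) m.

Definition delta1 (C : {set V}) : nat := \big[minn/n]_(v : V) #|Nangle C v|.
Definition m1 (C : {set V}) : nat := n - delta1 C + 1.

Definition induces_path_seq (p : seq V) : Prop :=
  uniq p /\
  forall x y, x \in p -> y \in p ->
    web_adj x y = ((index x p).+1 == index y p) || ((index y p).+1 == index x p).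

Inductive good (C : {set V}) : seq V -> Prop :=
| good_one a : a \in C -> good C [:: a]
| good_two a b : ~~ ((a \in C) && (b \in C)) -> good C [:: a; b]
| good_left a b s : a \notin C -> good C s -> good C [:: a, b & s]
| good_right s a b : b \notin C -> good C s -> good C (s ++ [:: a; b]).

End Web.

Arguments vdist n : clear implicits.
Arguments web_adj n k : clear implicits.
Arguments Nopen n k : clear implicits.
Arguments Nclosed n k : clear implicits.
Arguments Nangle n k : clear implicits.
Arguments legal n k : clear implicits.
Arguments dominating n k : clear implicits.
Arguments gamma_gr n k : clear implicits.
Arguments delta1 n k : clear implicits.
Arguments m1 n k : clear implicits.
Arguments induces_path_seq n k : clear implicits.
Arguments good n : clear implicits.

(* Main.v *)
Require Import Defs.
From mathcomp Require Import all_boot all_order zify.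
Set Implicit Arguments. Unset Strict Implicit. Unset Printing Implicit Defensive.

Definition adjN (n k a b : nat) : Prop :=
  a <> b /\ (maxn a b - minn a b <= k \/ n - k <= maxn a b - minn a b).

Lemma adjP n k (x y : 'I_n) : reflect (adjN n k x y) (web_adj n k x y).
Proof.
rewrite /web_adj /vdist /adjN -val_eqE.
apply: (iffP andP) => [[/eqP H1 /orP H2]|[/eqP H1 H2]]; split => //.
by apply/orP.
Qed.

Lemma adj_sym n k (x y : 'I_n) : web_adj n k x y = web_adj n k y x.
Proof. by rewrite /web_adj /vdist eq_sym maxnC minnC. Qed.

Lemma adj_irr n k (x : 'I_n) : web_adj n k x x = false.
Proof. by rewrite /web_adj eqxx. Qed.

Lemma in_Nopen n k (x y : 'I_n) : (y \in Nopen n k x) = web_adj n k x y.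
Proof. by rewrite /Nopen inE. Qed.

Lemma in_Nangle n k (C : {set 'I_n}) (x y : 'I_n) :
  (y \in Nangle n k C x) = ((x \in C) && (y == x)) || web_adj n k x y.
Proof.
rewrite /Nangle /Nclosed; case: (x \in C) => /=; last by rewrite in_Nopen.
by rewrite !inE.
Qed.

Lemma Nangle_notC n k (C : {set 'I_n}) (x : 'I_n) : x \notin C -> Nangle n k C x = Nopen n k x.
Proof. by rewrite /Nangle => /negbTE ->. Qed.

Definition covr n k (C U : {set 'I_n}) (w : seq 'I_n) :=
  U :|: \bigcup_(y <- w) Nangle n k C y.

Lemma covr_nil n k (C : {set 'I_n}) (U : {set 'I_n}) : covr k C U [::] = U.
Proof. by rewrite /covr big_nil setU0. Qed.

Lemma covr_cons n k (C : {set 'I_n}) (U : {set 'I_n}) x w :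
  covr k C U (x :: w) = covr k C (U :|: Nangle n k C x) w.
Proof. by rewrite /covr big_cons setUA. Qed.

Lemma covr_cat n k (C : {set 'I_n}) (U : {set 'I_n}) w1 w2 :
  covr k C U (w1 ++ w2) = covr k C (covr k C U w1) w2.
Proof.
elim: w1 U => [|x w1 IH] U /=; first by rewrite covr_nil.
by rewrite !covr_cons IH.
Qed.

Lemma sub_covr n k (C : {set 'I_n}) (U : {set 'I_n}) w : U \subset covr k C U w.
Proof. exact: subsetUl. Qed.

Lemma in_covr n k (C : {set 'I_n}) (U : {set 'I_n}) w z :
  (z \in covr k C U w) = (z \in U) || has (fun y => z \in Nangle n k C y) w.
Proof.
elim: w U => [|x w IH] U; first by rewrite covr_nil orbF.
rewrite covr_cons IH inE /=; by case: (z \in U); case: (z \in Nangle n k C x).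
Qed.

Lemma legal_from_cat n k (C : {set 'I_n}) (U : {set 'I_n}) w1 w2 :
  legal_from k C U (w1 ++ w2) =
  legal_from k C U w1 && legal_from k C (covr k C U w1) w2.
Proof.
elim: w1 U => [|x w1 IH] U /=; first by rewrite covr_nil.
by rewrite IH covr_cons andbA.
Qed.

Lemma legal_bound n k (C : {set 'I_n}) (U : {set 'I_n}) w :
  legal_from k C U w -> #|U| + size w <= #|covr k C U w|.
Proof.
elim: w U => [|x w IH] U /=; first by rewrite covr_nil addn0.
case/andP => Hx Hw; rewrite covr_cons.
have := IH _ Hw.
have : #|U| < #|U :|: Nangle n k C x|.
  by apply: proper_card; rewrite setUC; apply: properUr.
by move=> H1 H2; apply: leq_trans H2; rewrite addnS ltn_add2r.
Qed.

Lemma legal_bound_n n k (C : {set 'I_n}) (U : {set 'I_n}) w :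
  legal_from k C U w -> #|U| + size w <= n.
Proof.
move=> H; apply: leq_trans (legal_bound H) _.
by rewrite -[X in _ <= X](card_ord n) max_card.
Qed.

Lemma two_new n k (C : {set 'I_n}) (U : {set 'I_n}) x w y z :
  legal_from k C U (x :: w) -> n <= #|U| + size (x :: w) ->
  y \in Nangle n k C x -> z \in Nangle n k C x -> y \notin U -> z \notin U ->
  y = z.
Proof.
move=> /= /andP [Hx Hw] Hs Hy Hz HyU HzU.
apply/eqP; apply: contraT => Hyz.
have H1 := legal_bound_n Hw.
have : #|y |: (z |: U)| <= #|U :|: Nangle n k C x|.
  apply: subset_leq_card; apply/subsetP => a; rewrite !inE.
  by case/orP => [/eqP ->|/orP [/eqP ->|->]]; rewrite ?Hy ?Hz ?orbT.
rewrite cardsU1 cardsU1 !inE negb_or Hyz HyU HzU /=.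
move: Hs H1 => /=; lia.
Qed.

Lemma ind_left n k (a b : 'I_n) s :
  induces_path_seq n k [:: a, b & s] ->
  [/\ induces_path_seq n k s, web_adj n k a b, a \notin s, b \notin s
    & forall y, y \in s -> ~~ web_adj n k a y].
Proof.
case=> Hu H; move: (Hu) => /= /andP [/norP [Hab Has]] /andP [Hbs Hs].
have Hi : forall x, x \in s -> index x [:: a, b & s] = (index x s).+2.
  move=> x Hx /=.
  have -> : (a == x) = false by apply: (contraNF _ Has) => /eqP ->.
  by have -> : (b == x) = false by apply: (contraNF _ Hbs) => /eqP ->.
split => //.
- split => // x y Hx Hy; rewrite H ?inE ?Hx ?Hy ?orbT // !Hi //.
- by rewrite H ?inE ?eqxx ?orbT //= eqxx (negbTE Hab) eqxx.
- move=> y Hy; rewrite H ?inE ?eqxx ?Hy ?orbT // (Hi y Hy) /=.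
  by rewrite eqxx.
Qed.

Lemma ind_right n k (a b : 'I_n) s :
  induces_path_seq n k (s ++ [:: a; b]) ->
  [/\ induces_path_seq n k s, web_adj n k b a, a \notin s, b \notin s
    & forall y, y \in s -> ~~ web_adj n k b y].
Proof.
case=> Hu H.
move: (Hu); rewrite cat_uniq => /and3P [Hs Hn Hab2].
have Has : a \notin s by apply: contra Hn => Ha; rewrite /= Ha.
have Hbs : b \notin s by apply: contra Hn => Hb; rewrite /= Hb orbT.
have Hab : a != b by move: Hab2; rewrite /= inE andbT.
have Hi : forall x, x \in s -> index x (s ++ [:: a; b]) = index x s.
  by move=> x Hx; rewrite index_cat Hx.
have Ha : index a (s ++ [:: a; b]) = size s.
  by rewrite index_cat (negbTE Has) /= eqxx addn0.
have Hb : index b (s ++ [:: a; b]) = (size s).+1.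
  by rewrite index_cat (negbTE Hbs) /= (negbTE Hab) eqxx addn1.
split => //.
- split => // x y Hx Hy; rewrite H ?mem_cat ?Hx ?Hy // !Hi //.
- by rewrite H ?mem_cat ?inE ?eqxx ?orbT // Ha Hb eqxx orbT.
- move=> y Hy; rewrite H ?mem_cat ?Hy ?inE ?eqxx ?orbT // Hb Hi //.
  have : index y s < size s by rewrite index_mem.
  move=> Hlt; apply/negP; case/orP => /eqP E; lia.
Qed.

Lemma covr_mono n k (C U : {set 'I_n}) w1 w2 x :
  x \in covr k C U w1 -> x \in covr k C U (w1 ++ w2).
Proof. by rewrite covr_cat => H; apply: (subsetP (sub_covr _ _ _ _)). Qed.

Lemma wrap n k (C U : {set 'I_n}) a b ws :
  a \notin C -> web_adj n k a b -> a \notin U -> b \notin U ->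
  legal_from k C (U :|: Nangle n k C a) ws ->
  (forall y, y \in ws -> a \notin Nangle n k C y) ->
  [/\ legal_from k C U (a :: ws ++ [:: b]),
      a \in covr k C U (a :: ws ++ [:: b]) &
      b \in covr k C U (a :: ws ++ [:: b])].
Proof.
move=> HaC Hab HaU HbU Hws Hy.
have HbN : b \in Nangle n k C a by rewrite in_Nangle Hab orbT.
have HaN : a \in Nangle n k C b by rewrite in_Nangle adj_sym Hab orbT.
have HaW : a \notin covr k C (U :|: Nangle n k C a) ws.
  rewrite in_covr inE (negbTE HaU) Nangle_notC // in_Nopen adj_irr /=.
  by apply/hasPn => y /Hy.
split.
- rewrite /= legal_from_cat Hws /=; apply/andP; split.
    by apply/subsetPn; exists b.
  by rewrite andbT; apply/subsetPn; exists a.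
- rewrite covr_cons covr_cat covr_cons covr_nil inE HaN orbT //.
- rewrite covr_cons; apply: covr_mono; rewrite in_covr inE HbN orbT //.
Qed.

Lemma pair_ok n k (C U : {set 'I_n}) a b :
  a \notin C -> web_adj n k a b -> a \notin U -> b \notin U ->
  [/\ legal_from k C U [:: a; b], uniq [:: a; b] &
      {subset [:: a; b] <= covr k C U [:: a; b]}].
Proof.
move=> HaC Hab HaU HbU.
have [H1 H2 H3] := wrap (ws := [::]) HaC Hab HaU HbU isT (fun y (H : y \in [::]) => ltac:(by [])).
split => //.
  by rewrite /= inE andbT; apply/eqP => E; rewrite E adj_irr in Hab.
move=> x; rewrite 2!inE => /orP [] /eqP ->; [exact: H2|exact: H3].
Qed.

Lemma suff_core n k (C : {set 'I_n}) q :
  good n C q -> induces_path_seq n k q ->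
  forall U : {set 'I_n}, (forall x, x \in q -> x \notin U) ->
  exists w, [/\ legal_from k C U w, uniq w, {subset w <= q}, size w = size q
    & {subset q <= covr k C U w}].
Proof.
elim=> {q}.
- move=> a HaC _ U HU; exists [:: a]; split => //=.
  + rewrite andbT; apply/subsetPn; exists a; first by rewrite in_Nangle HaC eqxx.
    by apply: HU; rewrite inE.
  + move=> x; rewrite inE => /eqP ->; rewrite covr_cons covr_nil inE.
    by rewrite in_Nangle HaC eqxx orbT.
- move=> a b Hab Hind U HU.
  have [_ Hadj _ _ _] := ind_left (s := [::]) Hind.
  have HaU : a \notin U by apply: HU; rewrite inE eqxx.
  have HbU : b \notin U by apply: HU; rewrite !inE eqxx orbT.
  case HaC: (a \in C).
  + have HbC : b \notin C by move: Hab; rewrite HaC.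
    have [H1 H2 H3] := pair_ok HbC (etrans (adj_sym _ _ _) Hadj) HbU HaU.
    exists [:: b; a]; split => //.
    * by move=> x; rewrite !inE orbC.
    * by move=> x Hx; apply: H3; move: Hx; rewrite !inE orbC.
  + have [H1 H2 H3] := pair_ok (negbT HaC) Hadj HaU HbU.
    by exists [:: a; b]; split.
- move=> a b s HaC Hgs IH Hind U HU.
  have [Hs Hab Has Hbs Hna] := ind_left Hind.
  have HaU : a \notin U by apply: HU; rewrite inE eqxx.
  have HbU : b \notin U by apply: HU; rewrite !inE eqxx orbT.
  have HU' : forall x, x \in s -> x \notin U :|: Nangle n k C a.
    move=> x Hx; rewrite inE negb_or HU ?inE ?Hx ?orbT //=.
    by rewrite Nangle_notC // in_Nopen Hna.
  have [ws [Hl Hu Hsub Hsz Hcov]] := IH Hs _ HU'.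
  have HW : forall y, y \in ws -> a \notin Nangle n k C y.
    move=> y /Hsub Hy; rewrite in_Nangle negb_or adj_sym Hna // andbT.
    by apply/negP => /andP [_ /eqP E]; move: Has; rewrite E Hy.
  have [L1 C1 C2] := wrap HaC Hab HaU HbU Hl HW.
  exists (a :: ws ++ [:: b]); split => //.
  + have Hne : a != b by apply/eqP => E; rewrite E adj_irr in Hab.
    rewrite /= mem_cat negb_or inE cat_uniq Hu.
    by rewrite (contra (@Hsub a) Has) Hne /= orbF andbT (contra (@Hsub b) Hbs).
  + move=> x; rewrite inE mem_cat !inE => /orP [->//|/orP [/Hsub ->|->]];
      rewrite ?orbT //.
  + by rewrite /= size_cat Hsz addn1.
  + move=> x; rewrite !in_cons => /orP [/eqP ->//|/orP [/eqP ->//|Hx]].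
    by rewrite covr_cons covr_cat; apply: (subsetP (sub_covr _ _ _ _)); apply: Hcov.
- move=> s a b HbC Hgs IH Hind U HU.
  have [Hs Hba Has Hbs Hnb] := ind_right Hind.
  have HaU : a \notin U by apply: HU; rewrite mem_cat !inE eqxx orbT.
  have HbU : b \notin U by apply: HU; rewrite mem_cat !inE eqxx !orbT.
  have HU' : forall x, x \in s -> x \notin U :|: Nangle n k C b.
    move=> x Hx; rewrite inE negb_or HU ?mem_cat ?Hx //=.
    by rewrite Nangle_notC // in_Nopen Hnb.
  have [ws [Hl Hu Hsub Hsz Hcov]] := IH Hs _ HU'.
  have HW : forall y, y \in ws -> b \notin Nangle n k C y.
    move=> y /Hsub Hy; rewrite in_Nangle negb_or adj_sym Hnb // andbT.
    by apply/negP => /andP [_ /eqP E]; move: Hbs; rewrite E Hy.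
  have [L1 C1 C2] := wrap HbC Hba HbU HaU Hl HW.
  exists (b :: ws ++ [:: a]); split => //.
  + have Hne : b != a by apply/eqP => E; rewrite E adj_irr in Hba.
    rewrite /= mem_cat negb_or inE cat_uniq Hu.
    by rewrite (contra (@Hsub b) Hbs) Hne /= orbF andbT (contra (@Hsub a) Has).
  + move=> x; rewrite inE mem_cat !inE mem_cat !inE.
    by case/orP => [->|/orP [/Hsub ->|->]]; rewrite ?orbT.
  + by rewrite /= !size_cat Hsz /= addn1 addn2.
  + move=> x; rewrite mem_cat !in_cons in_nil orbF => /orP [Hx|/orP [/eqP ->//|/eqP ->//]].
    by rewrite covr_cons covr_cat; apply: (subsetP (sub_covr _ _ _ _)); apply: Hcov.
Qed.

Ltac clean := repeat match goal with
 | H : is_true (legal_from _ _ _ _) |- _ => clear H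
 | H : is_true (_ \in _) |- _ => clear H
 | H : is_true (~~ (_ \in _)) |- _ => clear H
 | H : is_true (~~ (_ \subset _)) |- _ => clear H
 | H : is_true (_ \subset _) |- _ => clear H
 | H : is_true (uniq _) |- _ => clear H
 | H : (_ \in _) = _ |- _ => clear H
 end.
Ltac nlia := clean; lia.

Section Nec.
Variables (n k : nat) (C : {set 'I_n}) (i : 'I_n) (p : seq 'I_n).
Hypothesis HiC : i \notin C.
Hypothesis Hp : forall x, (x \in p) = (x \notin Nclosed n k i).
Hypothesis Hind : induces_path_seq n k p.
Hypothesis Hend : forall x, x \in Nopen n k i ->
  web_adj n k x (nth i p 0) \/ web_adj n k x (nth i p (size p).-1).

Local Notation a := (nth i p).
Local Notation s := (size p).

Lemma a_in j : j < s -> a j \in p.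
Proof. exact: mem_nth. Qed.

Lemma a_adj j l : j < s -> l < s ->
  web_adj n k (a j) (a l) = (j.+1 == l) || (l.+1 == j).
Proof.
move=> Hj Hl; case: Hind => Hu H.
by rewrite H ?a_in // !index_uniq.
Qed.

Lemma a_inj j l : j < s -> l < s -> (a j == a l) = (j == l).
Proof. by move=> Hj Hl; rewrite nth_uniq //; case: Hind. Qed.

Lemma a_noti j : j < s -> (web_adj n k i (a j) = false) /\ (a j != i).
Proof.
move=> Hj; have := a_in Hj; rewrite Hp /Nclosed in_setU1 negb_or in_Nopen.
by case/andP => -> /negbTE ->.
Qed.

Lemma a_notN j : j < s -> (i \in Nangle n k C (a j)) = false.
Proof.
move=> Hj; have [H1 H2] := a_noti Hj.
by rewrite in_Nangle adj_sym H1 orbF eq_sym (negbTE H2) andbF.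
Qed.

Lemma notin_p x : x \notin p -> x = i \/ x \in Nopen n k i.
Proof.
by rewrite Hp negbK /Nclosed in_setU1 => /orP [/eqP ->|->]; [left|right].
Qed.

Lemma a_nbr j y : j < s -> web_adj n k (a j) y ->
  y \in Nopen n k i \/ exists2 l, l < s & y = a l /\ ((j.+1 == l) || (l.+1 == j)).
Proof.
move=> Hj Hy; case Hyp: (y \in p).
- right; exists (index y p); first by rewrite index_mem.
  have E : y = a (index y p) by rewrite nth_index.
  split => //; rewrite -a_adj ?index_mem // -E //.
- case: (notin_p (negbT Hyp)) => [E|]; last by left.
  by move: Hy; rewrite E adj_sym (a_noti Hj).1.
Qed.

Lemma U_ext (U : {set 'I_n}) j0 l : j0 < s -> l < s -> a j0 \notin C ->
  (a l \in U :|: Nangle n k C (a j0)) = (a l \in U) || ((j0.+1 == l) || (l.+1 == j0)).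
Proof.
by move=> Hj Hl HC; rewrite inE Nangle_notC // in_Nopen a_adj.
Qed.

Lemma card_lt (U : {set 'I_n}) : i \notin U -> #|U| < n.
Proof.
move=> H; have := max_card (i |: U); rewrite cardsU1 H card_ord add1n; set u := #|U|; lia.
Qed.

Lemma card_grow (U : {set 'I_n}) x : ~~ (Nangle n k C x \subset U) ->
  #|U| < #|U :|: Nangle n k C x|.
Proof. by move=> H; apply: proper_card; rewrite setUC; apply: properUr. Qed.

Lemma nec_core : forall c L (U : {set 'I_n}) (w used : seq 'I_n),
  0 < c -> L + c <= s -> ~~ odd L -> ~~ odd (s - (L + c)) ->
  (forall j, L <= j < L + c -> a j \notin U) ->
  (forall j, j < L -> odd j -> a j \in U) ->
  (forall j, j < L -> ~~ odd j -> (a j \notin U) && (a j \in used)) ->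
  (forall j, L + c <= j < s -> ~~ odd (j - (L + c)) -> a j \in U) ->
  (forall j, L + c <= j < s -> odd (j - (L + c)) -> (a j \notin U) && (a j \in used)) ->
  i \notin U -> i \in used -> Nopen n k i \subset U ->
  legal_from k C U w -> n <= #|U| + size w -> uniq w ->
  (forall x, x \in w -> x \notin used) ->
  good n C (map a (iota L c)).
Proof.
move=> c; have [m Hm] := ubnP c; elim: m c Hm => // m IH c Hcm L U w used
  Hc0 HLc HevL HevR Hcore Hinl Houtl Hinr Houtr HiU Hiused HNU Hleg Hsz Huw Hwused.
case: w Hleg Hsz Huw Hwused => [|x w] Hleg Hsz Huw Hwused.
  by have := card_lt HiU; move: Hsz; rewrite /= addn0; set u := #|U|; lia.
have Hxu : x \notin used by apply: Hwused; rewrite inE eqxx.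
have two : forall y z, y \in Nangle n k C x -> z \in Nangle n k C x ->
    y \notin U -> z \notin U -> y = z.
  by move=> y z Hy Hz HyU HzU; apply: (two_new Hleg Hsz Hy Hz HyU HzU).
move: (Hleg) => /= /andP [HxN Hleg'].
have Hs0 : 0 < s by nlia.
case Hxp: (x \in p); last first.
  case: (notin_p (negbT Hxp)) => [Exi|Hxi].
    by rewrite Exi Hiused in Hxu.
  have HiN : i \in Nangle n k C x by rewrite in_Nangle adj_sym -in_Nopen Hxi orbT.
  have a0U : a 0 \notin U.
    case: (posnP L) => HL0; first by apply: Hcore; nlia.
    by case/andP: (Houtl 0 HL0 isT).
  have asU : a s.-1 \notin U.
    case: (eqVneq (L + c) s) => HR; first by apply: Hcore; nlia.
    have H1 : L + c <= s.-1 < s by nlia.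
    have H2 : odd (s.-1 - (L + c)) by nlia.
    by case/andP: (Houtr s.-1 H1 H2).
  case: (Hend Hxi) => Hadj.
  - have E := two _ _ HiN (etrans (in_Nangle _ _ _ _) (introT orP (or_intror Hadj))) HiU a0U.
    by have := (a_noti Hs0).2; rewrite -E eqxx.
  - have E := two _ _ HiN (etrans (in_Nangle _ _ _ _) (introT orP (or_intror Hadj))) HiU asU.
    have Hs1 : s.-1 < s by nlia.
    by have := (a_noti Hs1).2; rewrite -E eqxx.
set j := index x p.
have Hj : j < s by rewrite index_mem.
have Ex : x = a j by rewrite nth_index.
have inN : forall l, l < s -> ((j.+1 == l) || (l.+1 == j)) -> a l \in Nangle n k C x.
  by move=> l Hl Hjl; rewrite Ex in_Nangle a_adj // Hjl orbT.
have contra2 : forall l1 l2, l1 < s -> l2 < s -> l1 != l2 ->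
    ((j.+1 == l1) || (l1.+1 == j)) -> ((j.+1 == l2) || (l2.+1 == j)) ->
    a l1 \notin U -> a l2 \notin U -> False.
  move=> l1 l2 H1 H2 Hne A1 A2 U1 U2.
  have := two _ _ (inN _ H1 A1) (inN _ H2 A2) U1 U2.
  by move/eqP; rewrite a_inj // (negbTE Hne).
case: (ltnP j L) => HjL.
  case Hoj: (odd j).
  - exfalso; apply: (contra2 j.-1 j.+1); try by clean; lia.
    + by case/andP: (Houtl j.-1 ltac:(nlia) ltac:(nlia)).
    + case: (eqVneq j.+1 L) => E; first by apply: Hcore; nlia.
      by case/andP: (Houtl j.+1 ltac:(nlia) ltac:(nlia)).
  - by case/andP: (Houtl j HjL (negbT Hoj)) => _; rewrite -Ex (negbTE Hxu).
case: (ltnP j (L + c)) => HjR; last first.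
  case Hoj: (odd (j - (L + c))).
  - by case/andP: (Houtr j ltac:(nlia) Hoj) => _; rewrite -Ex (negbTE Hxu).
  - exfalso; apply: (contra2 j.-1 j.+1); try by clean; lia.
    + case: (eqVneq j (L + c)) => E; first by apply: Hcore; nlia.
      by case/andP: (Houtr j.-1 ltac:(nlia) ltac:(nlia)).
    + by case/andP: (Houtr j.+1 ltac:(nlia) ltac:(nlia)).
have Hxsplit : forall y, y \in w -> y \notin x :: used.
  move=> y Hy; rewrite inE negb_or (Hwused y) ?inE ?Hy ?orbT // andbT.
  by apply/eqP => E; move: Huw; rewrite /= -E Hy.
have Hcard : n <= #|U :|: Nangle n k C x| + size w.
  have := card_grow HxN; move: Hsz => /=; set u1 := #|U|; set u2 := #|U :|: _|; nlia.
have HNU' : Nopen n k i \subset U :|: Nangle n k C x.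
  exact: subset_trans HNU (subsetUl _ _).
have Hiu' : i \in x :: used by rewrite inE Hiused orbT.
have Hxu' : x \in x :: used by rewrite inE eqxx.
have Huw' : uniq w by case/andP: Huw.
case: (eqVneq j L) => HjLe.
  have HLs : L < s by nlia.
  case: (eqVneq c 1) => Hc1.
    rewrite Hc1 /=.
    case HaC: (a L \in C); first by apply: good_one.
    exfalso; move/negP: HxN; apply; apply/subsetP => y.
    rewrite Ex HjLe Nangle_notC ?HaC // in_Nopen => Hy.
    case: (a_nbr HLs Hy) => [Hyi|[l Hl [-> Hjl]]]; first exact: (subsetP HNU).
    case/orP: Hjl => /eqP El.
    - by apply: Hinr; nlia.
    - by apply: Hinl; nlia.
  have HL1 : L.+1 < s by nlia.
  have U1 : a L.+1 \notin U by apply: Hcore; nlia.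
  have U0 : a L \notin U by apply: Hcore; nlia.
  have HaC : a L \notin C.
    apply/negP => HaC.
    have Hin0 : a L \in Nangle n k C x by rewrite Ex HjLe in_Nangle HaC eqxx.
    have Hin1 : a L.+1 \in Nangle n k C x by apply: inN => //; rewrite HjLe eqxx.
    by have := two _ _ Hin0 Hin1 U0 U1 => /eqP; rewrite a_inj // => /eqP; nlia.
  case: (eqVneq c 2) => Hc2.
    by rewrite Hc2 /=; apply: good_two; rewrite (negbTE HaC).
  have HxC : a j \notin C by rewrite HjLe.
  have Hg : good n C (map a (iota L.+2 (c - 2))).
    apply: (IH (c - 2) ltac:(nlia) L.+2 (U :|: Nangle n k C x) w (x :: used));
      try by clean; lia.
    - move=> l Hl; have Hls : l < s by nlia.
      rewrite Ex U_ext // negb_or (Hcore l ltac:(nlia)) /=.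
      by apply/norP; split; apply/eqP; nlia.
    - move=> l Hl Hol; have Hls : l < s by nlia.
      rewrite Ex U_ext //; case: (ltnP l L) => H; first by rewrite Hinl.
      by apply/orP; right; apply/orP; left; apply/eqP; nlia.
    - move=> l Hl Hel; have Hls : l < s by nlia.
      rewrite Ex U_ext // inE; case: (ltnP l L) => H.
        case/andP: (Houtl l H Hel) => H1 H2; rewrite negb_or H1 H2 orbT andbT /=.
        by apply/norP; split; apply/eqP; nlia.
      have El : l = j by nlia.
      rewrite El HjLe eqxx orTb andbT negb_or U0 /=.
      by apply/norP; split; apply/eqP; nlia.
    - move=> l Hl Hel; rewrite inE Hinr //; nlia.
    - move=> l Hl Hol; have Hls : l < s by nlia.
      case/andP: (Houtr l ltac:(nlia) ltac:(nlia)) => H1 H2.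
      rewrite Ex U_ext // inE H2 orbT andbT negb_or H1 /=.
      by apply/norP; split; apply/eqP; nlia.
    - by rewrite inE negb_or HiU Ex a_notN.
    - exact: Hiu'.
    - exact: HNU'.
    - exact: Hleg'.
    - exact: Huw'.
    - exact: Hxsplit.
  have E2 : c = (c - 2).+2 by nlia.
  by rewrite E2 /=; apply: good_left; [rewrite -HjLe | exact: Hg].
case: (eqVneq j (L + c).-1) => HjRe.
  have HjL' : L < j by nlia.
  have HLs : j < s by nlia.
  have Hj1 : j.-1 < s by nlia.
  have U1 : a j.-1 \notin U by apply: Hcore; nlia.
  have U0 : a j \notin U by apply: Hcore; nlia.
  have HaC : a j \notin C.
    apply/negP => HaC.
    have Hin0 : a j \in Nangle n k C x by rewrite Ex in_Nangle HaC eqxx.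
    have Hin1 : a j.-1 \in Nangle n k C x by apply: inN => //; apply/orP; right; apply/eqP; nlia.
    by have := two _ _ Hin0 Hin1 U0 U1 => /eqP; rewrite a_inj // => /eqP; nlia.
  case: (eqVneq c 2) => Hc2.
    have EL : j = L.+1 by nlia.
    by rewrite Hc2 /=; apply: good_two; rewrite -EL (negbTE HaC) andbF.
  have Hg : good n C (map a (iota L (c - 2))).
    apply: (IH (c - 2) ltac:(nlia) L (U :|: Nangle n k C x) w (x :: used));
      try by clean; lia.
    - move=> l Hl; have Hls : l < s by nlia.
      rewrite Ex U_ext // negb_or (Hcore l ltac:(nlia)) /=.
      by apply/norP; split; apply/eqP; nlia.
    - by move=> l Hl Hol; rewrite inE Hinl.
    - move=> l Hl Hel; have Hls : l < s by nlia.
      rewrite Ex U_ext // inE; case/andP: (Houtl l Hl Hel) => H1 H2.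
      rewrite negb_or H1 H2 orbT andbT /=.
      by apply/norP; split; apply/eqP; nlia.
    - move=> l Hl Hel; have Hls : l < s by nlia.
      rewrite Ex U_ext //; case: (ltnP l (L + c)) => H.
        by apply/orP; right; apply/orP; right; apply/eqP; nlia.
      by rewrite Hinr //; nlia.
    - move=> l Hl Hol; have Hls : l < s by nlia.
      rewrite Ex U_ext // inE; case: (ltnP l (L + c)) => H.
        have El : l = j by nlia.
        rewrite El eqxx orTb andbT negb_or U0 /=.
        by apply/norP; split; apply/eqP; nlia.
      case/andP: (Houtr l ltac:(nlia) ltac:(nlia)) => H1 H2.
      rewrite negb_or H1 H2 orbT andbT /=.
      by apply/norP; split; apply/eqP; nlia.
    - by rewrite inE negb_or HiU Ex a_notN.
    - exact: Hiu'.
    - exact: HNU'.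
    - exact: Hleg'.

    - exact: Huw'.
    - exact: Hxsplit.
  have E2 : c = (c - 2) + 2 by nlia.
  rewrite E2 iotaD map_cat /=.
  have Ej : (L + (c - 2)).+1 = j by nlia.
  by rewrite Ej; apply: good_right.
exfalso; apply: (contra2 j.-1 j.+1); try by clean; lia.
- by apply: Hcore; nlia.
- by apply: Hcore; nlia.
Qed.
End Nec.

Section Auto.
Variables (n k : nat) (f g : 'I_n -> 'I_n).
Hypothesis fK : cancel f g.
Hypothesis gK : cancel g f.
Hypothesis fadj : forall x y, web_adj n k (f x) (f y) = web_adj n k x y.

Lemma im_mem (A : {set 'I_n}) y : (y \in f @: A) = (g y \in A).
Proof. by rewrite (can2_imset_pre _ fK gK) inE. Qed.

Lemma im_memf (A : {set 'I_n}) x : (f x \in f @: A) = (x \in A).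
Proof. by rewrite im_mem fK. Qed.

Lemma Nangle_im (C : {set 'I_n}) x : Nangle n k (f @: C) (f x) = f @: Nangle n k C x.
Proof.
apply/setP => y; rewrite im_mem !in_Nangle im_memf.
by rewrite -(fadj _ (g y)) gK -(can_eq gK) fK.
Qed.

Lemma sub_im (A B : {set 'I_n}) : (f @: A \subset f @: B) = (A \subset B).
Proof.
apply/subsetP/subsetP => H x.
  by move=> Hx; rewrite -(im_memf B); apply: H; rewrite im_memf.
by rewrite !im_mem; apply: H.
Qed.

Lemma legal_from_im (C U : {set 'I_n}) w :
  legal_from k (f @: C) (f @: U) (map f w) = legal_from k C U w.
Proof.
elim: w U => [|x w IH] U //=.
by rewrite Nangle_im sub_im -imsetU IH.
Qed.

Lemma legal_im (C : {set 'I_n}) s : legal n k (f @: C) (map f s) = legal n k C s.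
Proof.
rewrite /legal (map_inj_uniq (can_inj fK)); case: s => //= x w.
by rewrite Nangle_im legal_from_im.
Qed.

Lemma good_im (C : {set 'I_n}) p : good n C p -> good n (f @: C) (map f p).
Proof.
elim=> {p}.
- by move=> a Ha; apply: good_one; rewrite im_memf.
- by move=> a b H; apply: good_two; rewrite !im_memf.
- by move=> a b s Ha _ IH; apply: good_left => //; rewrite im_memf.
- by move=> s a b Hb _ IH; rewrite map_cat; apply: good_right => //; rewrite im_memf.
Qed.

Lemma ind_im p : induces_path_seq n k p -> induces_path_seq n k (map f p).
Proof.
case=> Hu H; split; first by rewrite (map_inj_uniq (can_inj fK)).
move=> x y /mapP [x' Hx' ->] /mapP [y' Hy' ->].
by rewrite fadj H // !(index_map (can_inj fK)).
Qed.

Lemma Nclosed_im i : Nclosed n k (f i) = f @: Nclosed n k i.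
Proof.
apply/setP => y; rewrite im_mem /Nclosed !in_setU1 !in_Nopen.
by rewrite -(fadj _ (g y)) gK -(can_eq gK) fK.
Qed.

Lemma setp_im (p : seq 'I_n) i :
  [set x in p] = ~: Nclosed n k i -> [set x in map f p] = ~: Nclosed n k (f i).
Proof.
move=> H; apply/setP => y; rewrite Nclosed_im inE in_setC im_mem -in_setC -H inE.
by rewrite -{1}(gK y) (mem_map (can_inj fK)).
Qed.

Lemma card_Nopen_im x : #|Nopen n k (f x)| = #|Nopen n k x|.
Proof.
have -> : Nopen n k (f x) = f @: Nopen n k x.
  apply/setP => y; rewrite im_mem !in_Nopen.
  by rewrite -(fadj _ (g y)) gK.
exact: card_imset (can_inj fK).
Qed.

End Auto.

Definition rotv n (Hn : 0 < n) (r : nat) (x : 'I_n) : 'I_n := Ordinal (ltn_pmod (x + r) Hn).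

Lemma rotvE n (Hn : 0 < n) r x : r <= n ->
  val (rotv Hn r x) = if x + r < n then x + r else x + r - n.
Proof.
move=> Hr /=; case: ltnP => H; first by rewrite modn_small.
have E : x + r = (x + r - n) + n by have := ltn_ord x; lia.
rewrite {1}E modnDr modn_small //; have := ltn_ord x; lia.
Qed.

Lemma adj_rotv n k (Hn : 0 < n) r x y : r <= n ->
  web_adj n k (rotv Hn r x) (rotv Hn r y) = web_adj n k x y.
Proof.
move=> Hr; have Hx := ltn_ord x; have Hy := ltn_ord y.
apply/adjP/adjP; rewrite /adjN !rotvE //; case: ltnP => H1; case: ltnP => H2; lia.
Qed.

Lemma rotvK n (Hn : 0 < n) r : r <= n -> cancel (rotv Hn r) (rotv Hn (n - r)).
Proof.
move=> Hr x; apply: val_inj; have Hx := ltn_ord x.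
change (nat_of_ord (rotv Hn (n - r) (rotv Hn r x)) = nat_of_ord x).
have Hr' : n - r <= n by lia.
have H1 := rotvE Hn (rotv Hn r x) Hr'.
rewrite H1 !rotvE //; case: (ltnP (x + r) n) => B; case: ltnP => A; lia.
Qed.

Lemma adjE n k (x y : 'I_n) : web_adj n k x y =
  (nat_of_ord x != nat_of_ord y) &&
  ((maxn x y - minn x y <= k) || (n - k <= maxn x y - minn x y)).
Proof. by rewrite /web_adj /vdist -val_eqE. Qed.

Lemma card_val n (P : pred nat) : #|[set x : 'I_n | P x]| = count P (iota 0 n).
Proof.
rewrite cardsE cardE /enum_mem size_filter.
rewrite -val_enum_ord count_map enumT. by apply: eq_count => x.
Qed.

Lemma cnt_all (P : pred nat) b a : (forall x, a <= x < a + b -> P x) -> count P (iota a b) = b.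
Proof.
elim: b a => [|b IH] a H //=.
rewrite H; last by lia.
by rewrite IH // => x Hx; apply: H; lia.
Qed.

Lemma cnt_none (P : pred nat) b a : (forall x, a <= x < a + b -> ~~ P x) -> count P (iota a b) = 0.
Proof.
elim: b a => [|b IH] a H //=.
rewrite (negbTE (H a _)); last by lia.
by rewrite IH // => x Hx; apply: H; lia.
Qed.

Section Geo.
Variables (n k : nat).
Hypothesis Hk : 0 < k.
Hypothesis Hn : 2 * (k + 1) <= n.

Lemma n_pos : 0 < n. Proof. lia. Qed.

Definition mk (j : nat) : 'I_n := Ordinal (ltn_pmod j n_pos).

Lemma mkE j : j < n -> nat_of_ord (mk j) = j.
Proof. by move=> H; rewrite /= modn_small. Qed.

Local Notation z := (mk 0).
Local Notation t := (n - 2 * k - 1).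

Lemma zE : nat_of_ord z = 0. Proof. by rewrite mkE // n_pos. Qed.

Lemma in_Nopen_z (y : 'I_n) :
  (y \in Nopen n k z) = (0 < y) && ((y <= k) || (n - k <= y)).
Proof. rewrite in_Nopen adjE zE; have := ltn_ord y; lia. Qed.

Lemma card_Nopen_z : #|Nopen n k z| = 2 * k.
Proof.
have -> : Nopen n k z = [set x : 'I_n | (0 < x) && ((x <= k) || (n - k <= x))].
  by apply/setP => y; rewrite in_Nopen_z inE.
rewrite (card_val n (fun j => (0 < j) && ((j <= k) || (n - k <= j)))).
have E : n = 1 + k + t + k by lia.
have -> : iota 0 n = iota 0 (1 + k + t + k) by rewrite -E.
rewrite !iotaD !count_cat.
rewrite (@cnt_none _ 1 0); last by move=> x; lia.
rewrite (@cnt_all _ k); last by move=> x; lia.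
rewrite (@cnt_none _ t); last by move=> x; lia.
rewrite (@cnt_all _ k); last by move=> x; lia.
lia.
Qed.

Lemma card_Nopen (v : 'I_n) : #|Nopen n k v| = 2 * k.
Proof.
have Hv : v <= n by apply: ltnW.
have E : rotv n_pos v z = v.
  by apply: val_inj; rewrite /= mod0n add0n modn_small.
have K2 : cancel (rotv n_pos (n - v)) (rotv n_pos v).
  by move=> x; have := rotvK n_pos (leq_subr v n) x; rewrite subKn.
rewrite -E (card_Nopen_im (rotvK n_pos Hv) K2) ?card_Nopen_z //.
by move=> x y; rewrite adj_rotv.
Qed.

Definition p0 := map (fun j => mk (k.+1 + j)) (iota 0 t).

Lemma size_p0 : size p0 = t.
Proof. by rewrite size_map size_iota. Qed.

Lemma nth_p0 j : j < t -> nat_of_ord (nth z p0 j) = k.+1 + j.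
Proof.
move=> Hj; rewrite (nth_map 0) ?size_iota // nth_iota // mkE //; lia.
Qed.

Lemma mem_p0 (x : 'I_n) : (x \in p0) = (k < x) && (x < n - k).
Proof.
apply/mapP/idP => [[j Hj ->]|H].
  by rewrite mem_iota in Hj; rewrite mkE; lia.
exists (x - k.+1); first by rewrite mem_iota; lia.
apply/eqP; rewrite -val_eqE /= modn_small; lia.
Qed.

Lemma setp0 : [set x in p0] = ~: Nclosed n k z.
Proof.
apply/setP => x; rewrite inE in_setC /Nclosed in_setU1 in_Nopen_z mem_p0 -val_eqE /= mod0n.
have := ltn_ord x; lia.
Qed.

Lemma uniq_p0 : uniq p0.
Proof.
rewrite map_inj_in_uniq ?iota_uniq // => a b Ha Hb E.
have := congr1 val E; rewrite /= !modn_small; rewrite ?mem_iota in Ha Hb; lia.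
Qed.

Lemma ind_p0 : (k = 1) \/ (t <= 2) -> induces_path_seq n k p0.
Proof.
move=> Hkt; split; first exact: uniq_p0.
move=> x y Hx Hy.
have Hj : index x p0 < t by rewrite -size_p0 index_mem.
have Hl : index y p0 < t by rewrite -size_p0 index_mem.
have Vx : nat_of_ord x = k.+1 + index x p0 by rewrite -nth_p0 // nth_index.
have Vy : nat_of_ord y = k.+1 + index y p0 by rewrite -nth_p0 // nth_index.
rewrite adjE Vx Vy; move: Hj Hl; set j := index x p0; set l := index y p0; lia.
Qed.

Lemma end_p0 (x : 'I_n) : x \in Nopen n k z ->
  web_adj n k x (nth z p0 0) \/ web_adj n k x (nth z p0 (size p0).-1).
Proof.
have := ltn_ord x; rewrite in_Nopen_z size_p0 !adjE !nth_p0; lia.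
Qed.

Lemma seq_legal (C : {set 'I_n}) c : forall j (U : {set 'I_n}),
  (forall y : 'I_n, y \in U -> (y < j + k) || (n - k <= y)) -> j + c <= n - 2 * k ->
  legal_from k C U (map mk (iota j c)).
Proof.
elim: c => [|c IH] j U HU Hjc //=.
have Hjn : j < n by lia.
apply/andP; split.
  apply/subsetPn; exists (mk (j + k)).
    rewrite in_Nangle adjE !mkE; lia.
  apply/negP => /HU; rewrite mkE; lia.
apply: IH; last by lia.
move=> y; rewrite inE => /orP [/HU|]; first by lia.
rewrite in_Nangle adjE !mkE // => /orP [/andP [_ /eqP ->]|]; rewrite ?mkE //; try lia.
Qed.

Lemma seq0_legal (C : {set 'I_n}) : legal n k C (map mk (iota 0 (n - 2 * k))).
Proof.
have E : n - 2 * k = (n - 2 * k - 1).+1 by lia.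
rewrite /legal map_inj_in_uniq ?iota_uniq //.
  rewrite E /=; apply: seq_legal; last by lia.
  move=> y; rewrite in_Nangle adjE !mkE ?n_pos // => /orP [/andP [_ /eqP ->]|];
    rewrite ?mkE ?n_pos //; try lia.
move=> a b Ha Hb Eab; have := congr1 val Eab; rewrite /= !modn_small;
  rewrite ?mem_iota in Ha Hb; lia.
Qed.

Lemma no_tight (C : {set 'I_n}) w : 2 <= k -> 3 <= t -> z \notin C ->
  legal n k C (z :: w) -> size w = t.+1 -> False.
Proof.
move=> Hk2 Ht3 HzC /andP [Hu Hl] Hsz.
case: w Hu Hl Hsz => [|v w] Hu Hl Hsz //.
rewrite Nangle_notC // in Hl.
have Hsz' : n <= #|Nopen n k z| + size (v :: w) by rewrite card_Nopen_z Hsz; lia.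
have Hvz : nat_of_ord v != 0.
  move: Hu; rewrite /= inE negb_or => /andP [/andP [Hv _] _].
  by move: Hv; rewrite eq_sym -val_eqE /= mod0n.
have key : forall a b : nat, a < n -> b < n -> a != b ->
    web_adj n k v (mk a) -> web_adj n k v (mk b) ->
    ~~ web_adj n k z (mk a) -> ~~ web_adj n k z (mk b) -> False.
  move=> a b Ha Hb Hab Hva Hvb Hza Hzb.
  have := two_new Hl Hsz' (y := mk a) (z := mk b).
  rewrite !in_Nangle Hva Hvb !orbT !in_Nopen => /(_ isT isT Hza Hzb) /eqP.
  by rewrite -val_eqE /= !modn_small // (negbTE Hab).
have Hv := ltn_ord v.
case: (leqP (nat_of_ord v) k) => H1.
  apply: (key 0 k.+1); rewrite ?adjE ?mkE; nlia.
case: (leqP (n - k) (nat_of_ord v)) => H2.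
  apply: (key 0 (n - k - 1)); rewrite ?adjE ?mkE; nlia.
case: (leqP (nat_of_ord v) k.+1) => H3.
  apply: (key k.+2 k.+3); rewrite ?adjE ?mkE; nlia.
case: (leqP (n - k - 1) (nat_of_ord v)) => H4.
  apply: (key (n - k - 2) (n - k - 3)); rewrite ?adjE ?mkE; nlia.
apply: (key (v - 1) (v + 1)); rewrite ?adjE ?mkE; nlia.
Qed.

Lemma nec_z (C : {set 'I_n}) w : legal n k C (z :: w) -> size w = t.+1 ->
  [/\ z \notin C, good n C p0 & induces_path_seq n k p0].
Proof.
move=> Hleg Hsz; move: (Hleg) => /andP [Hu Hl].
have HzC : z \notin C.
  apply/negP => HzC; have := legal_bound_n Hl.
  rewrite /Nangle HzC /Nclosed cardsU1 in_Nopen adj_irr card_Nopen_z Hsz; lia.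
have Hkt : (k = 1) \/ (t <= 2).
  case: (leqP k 1) => H1; first by left; lia.
  case: (leqP t 2) => H2; first by right.
  by exfalso; apply: (no_tight (w := w) H1 H2 HzC Hleg Hsz).
have Hind := ind_p0 Hkt.
have Hp : forall x, (x \in p0) = (x \notin Nclosed n k z).
  by move=> x; rewrite -in_setC -setp0 inE.
rewrite Nangle_notC // in Hl.
have Hg := @nec_core n k C z p0 HzC Hp Hind end_p0 t 0 (Nopen n k z) w [:: z].
split => //.
rewrite -(mkseq_nth z p0) size_p0 /mkseq; apply: Hg; rewrite ?size_p0 //; try lia.
- move=> j Hj; rewrite in_Nopen.
  have Hjt : j < t by lia.
  rewrite adjE nth_p0 // zE; lia.
- by rewrite in_Nopen adj_irr.
- by rewrite inE.
- by rewrite card_Nopen_z Hsz; lia.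
- by move: Hu; rewrite /= => /andP [].
- by move=> x Hx; rewrite inE; apply: contraNneq (proj1 (andP Hu)) => <-.
Qed.

End Geo.

Lemma bigmin_le_seq (T : eqType) (r : seq T) (F : T -> nat) x0 x :
  x \in r -> \big[minn/x0]_(v <- r) F v <= F x.
Proof.
elim: r => //= y r IH; rewrite inE big_cons => /orP [/eqP <-|/IH H].
  exact: geq_minl.
exact: leq_trans (geq_minr _ _) H.
Qed.

Lemma bigmin_le n (F : 'I_n -> nat) x : \big[minn/n]_(v : 'I_n) F v <= F x.
Proof. exact: bigmin_le_seq (mem_index_enum x). Qed.

Lemma bigmin_ge n (F : 'I_n -> nat) lo : lo <= n -> (forall v, lo <= F v) ->
  lo <= \big[minn/n]_(v : 'I_n) F v.
Proof.
move=> H1 H2; apply: (big_ind (fun m => lo <= m)) => //.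
by move=> a b Ha Hb; rewrite leq_min Ha Hb.
Qed.

Lemma card_Nangle n k (Hk : 0 < k) (Hn : 2 * (k + 1) <= n) (C : {set 'I_n}) v :
  #|Nangle n k C v| = (v \in C) + 2 * k.
Proof.
rewrite /Nangle; case: (v \in C); last by rewrite (card_Nopen Hk Hn).
by rewrite /Nclosed cardsU1 in_Nopen adj_irr (card_Nopen Hk Hn).
Qed.

Lemma delta1_T n k (Hk : 0 < k) (Hn : 2 * (k + 1) <= n) :
  delta1 n k [set: 'I_n] = (2 * k).+1.
Proof.
have Hn0 := n_pos Hk Hn.
apply/eqP; rewrite eqn_leq; apply/andP; split.
  have := bigmin_le (fun v => #|Nangle n k [set: 'I_n] v|) (Ordinal Hn0).
  by rewrite /delta1 card_Nangle // inE.
apply: bigmin_ge; first by lia.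
by move=> v; rewrite card_Nangle // inE.
Qed.

Lemma delta1_nT n k (Hk : 0 < k) (Hn : 2 * (k + 1) <= n) (C : {set 'I_n}) :
  C != [set: 'I_n] -> delta1 n k C = 2 * k.
Proof.
move=> HC.
have : ~~ ([set: 'I_n] \subset C) by apply: contra HC => H; rewrite eqEsubset subsetT H.
case/subsetPn => v _ Hv.
apply/eqP; rewrite eqn_leq; apply/andP; split.
  have := bigmin_le (fun v => #|Nangle n k C v|) v.
  by rewrite /delta1 card_Nangle // (negbTE Hv).
apply: bigmin_ge; first by lia.
by move=> u; rewrite card_Nangle //; lia.
Qed.

Lemma legal_upper n k (Hk : 0 < k) (Hn : 2 * (k + 1) <= n) (C : {set 'I_n}) s :
  legal n k C s -> size s <= m1 n k C.
Proof.
case: s => [|x w] //= /andP [_ Hl].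
have H1 := legal_bound_n Hl.
have H2 := bigmin_le (fun v => #|Nangle n k C v|) x.
rewrite /m1 /delta1; move: H1 H2.
set d := \big[minn/n]_(v : 'I_n) _; set c := #|_|; lia.
Qed.

Lemma gamma_le n k (C : {set 'I_n}) B :
  (forall s, legal n k C s -> dominating n k C s -> size s <= B) -> gamma_gr n k C <= B.
Proof.
move=> H; rewrite /gamma_gr; apply/bigmax_leqP => m /existsP [t /andP [Hl Hd]].
by have := H _ Hl Hd; rewrite size_tuple.
Qed.

Lemma gamma_ge n k (C : {set 'I_n}) s :
  legal n k C s -> dominating n k C s -> size s <= gamma_gr n k C.
Proof.
move=> Hl Hd.
have Hs : size s < n.+1.
  move: Hl => /andP [Hu _]; rewrite ltnS -(card_uniqP Hu).
  by rewrite -[X in _ <= X](card_ord n) max_card.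
rewrite /gamma_gr; apply: (leq_trans _ (leq_bigmax_cond (Ordinal Hs) _)) => //.
by apply/existsP; exists (in_tuple s); rewrite Hl Hd.
Qed.

Lemma in_bigcup n k (C : {set 'I_n}) s u :
  (u \in \bigcup_(y <- s) Nangle n k C y) = has (fun y => u \in Nangle n k C y) s.
Proof. by have := in_covr k C set0 s u; rewrite /covr set0U in_set0. Qed.

Lemma adj_next n k (Hn0 : 0 < n) (H2 : 2 <= n) (u : 'I_n) :
  web_adj n k u (rotv Hn0 1 u) || (k == 0).
Proof.
have Hu := ltn_ord u.
rewrite adjE rotvE //; case: ltnP => H; lia.
Qed.

Lemma extend n k (Hk : 0 < k) (Hn : 2 * (k + 1) <= n) (C : {set 'I_n}) s :
  legal n k C s -> s <> [::] ->
  exists s2, [/\ legal n k C s2, dominating n k C s2 & size s <= size s2].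
Proof.
have Hn0 := n_pos Hk Hn.
have [m Hm] := ubnP (n - size s); elim: m s Hm => // m IH s Hm Hl Hne.
case Hd: (dominating n k C s); first by exists s.
have : ~~ ([set: 'I_n] \subset \bigcup_(y <- s) Nangle n k C y).
  by apply: contraNN (negbT Hd) => H; rewrite /dominating eqEsubset subsetT H.
case/subsetPn => u _ Hu.
set v := rotv Hn0 1 u.
have Huv : web_adj n k u v.
  have := adj_next k Hn0 ltac:(lia) u; rewrite -/v; case: (k =P 0) => [E|_]; first lia.
  by rewrite orbF.
have HuN : u \in Nangle n k C v by rewrite in_Nangle adj_sym Huv orbT.
have Hvs : v \notin s.
  apply: contra Hu => Hv; rewrite in_bigcup; apply/hasP; by exists v.
case: s Hm Hl Hne Hu Hvs Hd => [|x w] Hm Hl Hne Hu Hvs Hd //.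
have Hl2 : legal n k C (x :: rcons w v).
  move: Hl => /andP [Hu2 Hl]; apply/andP; split.
    by rewrite -rcons_cons rcons_uniq Hvs Hu2.
  rewrite -cats1 legal_from_cat Hl /= andbT; apply/subsetPn; exists u => //.
  by move: Hu; rewrite in_bigcup in_covr.
have Hsz : size (x :: w) < n.
  move: Hl2 => /andP [Hu2 _]; have := card_uniqP Hu2; rewrite /= size_rcons.
  by have := max_card (mem (x :: rcons w v)); rewrite card_ord => A <-.
have [s2 [A B D]] := IH (x :: rcons w v) ltac:(move: Hm Hsz; rewrite /= size_rcons; lia) Hl2 ltac:(by []).
by exists s2; split => //; move: D; rewrite /= size_rcons; lia.
Qed.

Lemma suff_top n k (Hk : 0 < k) (Hn : 2 * (k + 1) <= n) (C : {set 'I_n}) i p :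
  i \notin C -> [set x in p] = ~: Nclosed n k i -> induces_path_seq n k p ->
  good n C p -> exists s, legal n k C s /\ size s = (size p).+2.
Proof.
move=> HiC Hset Hind Hg.
have Hn0 := n_pos Hk Hn.
have Hp : forall x, x \in p -> x \notin Nclosed n k i.
  by move=> x Hx; rewrite -in_setC -Hset inE.
have HpN : forall x, x \in p -> x \notin Nopen n k i.
  by move=> x /Hp; rewrite /Nclosed in_setU1 negb_or => /andP [].
have [w [Hl Hu Hsub Hsz Hcov]] := suff_core Hg Hind (U := Nopen n k i) HpN.
set v := rotv Hn0 1 i.
have Hiv : web_adj n k i v.
  have := adj_next k Hn0 ltac:(lia) i; rewrite -/v; case: (k =P 0) => [E|_]; first lia.
  by rewrite orbF.
have HvN : v \in Nopen n k i by rewrite in_Nopen.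
have Hip : i \notin p.
  by apply/negP => /Hp; rewrite /Nclosed in_setU1 eqxx.
have Hvp : v \notin p by apply/negP => /HpN; rewrite HvN.
exists (i :: w ++ [:: v]); split; last by rewrite /= size_cat Hsz addn1.
apply/andP; split.
  rewrite /= mem_cat negb_or (contra (@Hsub i) Hip) inE /=.
  rewrite cat_uniq Hu /= andbT orbF (contra (@Hsub v) Hvp) andbT.
  by apply/eqP => E; rewrite -E adj_irr in Hiv.
rewrite Nangle_notC // legal_from_cat Hl /= andbT.
apply/subsetPn; exists i; first by rewrite in_Nangle adj_sym Hiv orbT.
rewrite in_covr in_Nopen adj_irr /=; apply/hasPn => y /Hsub Hy.
rewrite in_Nangle negb_or adj_sym -in_Nopen (HpN _ Hy) andbT.
apply/negP => /andP [_ /eqP E]; move: Hy Hip; rewrite E => ->; by [].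
Qed.

Unset Implicit Arguments.

Theorem proposition4 (n k : nat) (C : {set 'I_n}) :
  0 < k -> 2 * (k + 1) <= n ->
  let cond :=
    C = [set: 'I_n] \/
    exists i : 'I_n, i \notin C /\
      exists p : seq 'I_n,
        [set x in p] = ~: Nclosed n k i /\
        induces_path_seq n k p /\
        size p = n - 2 * k - 1 /\
        good n C p in
  (cond -> gamma_gr n k C = m1 n k C) /\
  (~ cond -> gamma_gr n k C = m1 n k C - 1).
Proof.
move=> Hk Hn cond.
have Hn0 := n_pos Hk Hn.
have Hup : gamma_gr n k C <= m1 n k C.
  by apply: gamma_le => s Hl _; apply: legal_upper.
have Hlow : n - 2 * k <= gamma_gr n k C.
  have Hl := seq0_legal Hk Hn C.
  have Hne : map (mk Hk Hn) (iota 0 (n - 2 * k)) <> [::].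
    have E : n - 2 * k = (n - 2 * k).-1.+1 by lia.
    by rewrite E.
  have [s2 [A B D]] := extend Hk Hn Hl Hne.
  by apply: leq_trans (gamma_ge A B); move: D; rewrite size_map size_iota.
case: (eqVneq C [set: 'I_n]) => HC.
  have Hm1 : m1 n k C = n - 2 * k by rewrite /m1 HC delta1_T //; lia.
  split.
    move=> _; apply/eqP; rewrite eqn_leq Hup; rewrite Hm1 in Hup *; exact: Hlow.
  by move=> H; exfalso; apply: H; left.
have Hm1 : m1 n k C = n - 2 * k + 1 by rewrite /m1 delta1_nT //; lia.
split.
  case=> [E|[i [HiC [p [Hset [Hind [Hsz Hg]]]]]]]; first by rewrite E eqxx in HC.
  have [s [Hl Hs]] := suff_top Hk Hn HiC Hset Hind Hg.
  have Hne : s <> [::] by move=> E; rewrite E in Hs.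
  have [s2 [A B D]] := extend Hk Hn Hl Hne.
  apply/eqP; rewrite eqn_leq Hup /=.
  apply: leq_trans (gamma_ge A B); rewrite Hm1; move: D; rewrite Hs Hsz; lia.
move=> Hnc; apply/eqP; rewrite eqn_leq; apply/andP; split; last by rewrite Hm1; lia.
apply: gamma_le => s Hl Hd.
have := legal_upper Hk Hn Hl; rewrite Hm1 => Hs.
case: (ltnP (size s) (n - 2 * k + 1)) => Hs2; first by lia.
exfalso; apply: Hnc; right.
case: s Hl Hd Hs Hs2 => [|x w] Hl Hd Hs Hs2; first by move: Hs2 => /=; lia.
have Hw : size w = (n - 2 * k - 1).+1 by move: Hs Hs2 => /=; lia.
have Hx : x <= n by apply: ltnW.
set f := rotv Hn0 (n - x).
set g := rotv Hn0 x.
have fK : cancel f g.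
  by move=> y; have := rotvK Hn0 (leq_subr x n) y; rewrite subKn.
have gK : cancel g f := rotvK Hn0 Hx.
have fadj : forall a b, web_adj n k (f a) (f b) = web_adj n k a b.
  by move=> a b; rewrite adj_rotv // leq_subr.
have gadj : forall a b, web_adj n k (g a) (g b) = web_adj n k a b.
  by move=> a b; rewrite adj_rotv.
have fx : f x = mk Hk Hn 0.
  apply: val_inj; rewrite /= mod0n; have := ltn_ord x.
  by move=> H; rewrite subnKC ?modnn //; apply: ltnW.
have Hl' : legal n k (f @: C) (mk Hk Hn 0 :: map f w).
  by rewrite -fx -(legal_im fK gK fadj C (x :: w)) in Hl *.
have [HzC Hg Hind] := nec_z Hl' ltac:(by rewrite size_map).
have gz : g (mk Hk Hn 0) = x by rewrite -fx fK.
have gfC : g @: (f @: C) = C.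
  by rewrite -imset_comp (eq_imset _ fK) imset_id.
exists x; split.
  by move: HzC; rewrite -fx (im_memf fK gK).
exists (map g (p0 Hk Hn)); split; last split; last split.
- by rewrite -gz; apply: (setp_im gK fK gadj); apply: setp0.
- exact: ind_im gK gadj _ Hind.
- by rewrite size_map size_p0.
- by rewrite -{1}gfC; apply: good_im gK fK _ _ Hg.
Qed.
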